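(* Assume (A1)–(A3), (A6) and (A7'), and let $T\ge T_0$ (with $T_0$ from (A7')) and $T\ge3$. Work on the event $\mathcal E_T=\{\forall\,1\le s\le e\le T:\ |\widehat C(s,e)-C(s,e)|\le\lambda_T\sqrt{e-s+1}\}$. Let $\boldsymbol\tau$ be an admissible segmentation containing a segment $E=[s,e]$ that contains exactly one true change point $\tau_k$, with $s\le\tau_k<e$, such that $n_1:=\tau_k-s+1\ge\delta_T$ and $n_2:=e-\tau_k\ge\delta_T$. Let $\boldsymbol\tau'$ be the segmentation obtained from $\boldsymbol\tau$ by replacing $E$ with the two segments $[s,\tau_k]$ and $[\tau_k+1,e]$. Then $\boldsymbol\tau'$ is admissible and $L(\boldsymbol\tau')<L(\boldsymbol\tau)$.
   Context: Let $Y_1,\dots,Y_T$ be random vectors in $\mathbb R^d$ with true change points $0=\tau_0<\tau_1<\dots<\tau_K<\tau_{K+1}=T$. Let $k$ be a positive definite kernel on $\mathbb R^d$ with RKHS $\mathcal H$, feature map $\phi(y)=k(y,\cdot)$, and $\mu_P=\mathbb E_{Y\sim P}\phi(Y)$. Define $\widehat C(s,e)=\sum_{t=s}^e k(Y_t,Y_t)-\frac{1}{e-s+1}\sum_{i=s}^e\sum_{j=s}^e k(Y_i,Y_j)$ and $C(s,e)=\mathbb E[\widehat C(s,e)]$. A segmentation with $K'$ change points is $\boldsymbol\tau'=(\tau'_0,\dots,\tau'_{K'+1})$ with $0=\tau'_0<\dots<\tau'_{K'+1}=T$ and segments $[\tau'_{r-1}+1,\tau'_r]$; $L(\boldsymbol\tau')=\sum_{r=1}^{K'+1}\widehat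 C(\tau'_{r-1}+1,\tau'_r)+\beta_T K'$ for a penalty $\beta_T>0$. Let $\lambda_T=4\sqrt2\,M\sqrt{(8m+5)\log T}$. (A1) For a fixed integer $m\ge0$, $(Y_t)$ is $m$-dependent: for every $t$, $(Y_1,\dots,Y_t)$ is independent of $(Y_{t+m+1},\dots,Y_T)$; for each $k$, $(Y_t)_{\tau_{k-1}<t\le\tau_k}$ is strictly stationary with marginal $P_k$. (A2) $k$ is bounded and characteristic, $0\le k\le M<\infty$. (A3) $\Delta_k^2:=\|\mu_{P_k}-\mu_{P_{k+1}}\|_{\mathcal H}^2>0$ for $k=1,\dots,K$, and $\Delta_\star^2:=\min_k\Delta_k^2>0$. (A6) $\delta_T\asymp\sqrt{T\log T}$ and $\delta_T\le\ell_T/3$, where $\ell_T=\min_k(\tau_k-\tau_{k-1})$; a segmentation is admissible if each of its segments has length at least $\delta_T$. (A7') With $\overline B_T=(4m+2)M+\frac{(2m^2+2m)M}{\delta_T}$, there is $T_0$ such that for all $T\ge T_0$: $\frac{\delta_T}{2}\Delta_\star^2>\beta_T+3\lambda_T\sqrt T+\overline B_T$. *)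

(* Defs.v *)
From HB Require Import structures.
From mathcomp Require Import all_boot all_order all_algebra.
From mathcomp Require Import all_classical all_reals all_analysis.
Set Implicit Arguments. Unset Strict Implicit. Unset Printing Implicit Defensive.
Import Order.TTheory GRing.Theory Num.Theory.
Local Open Scope classical_set_scope.
Local Open Scope ring_scope.


Section Defs.
Context {R : realType} {d : nat}.
Notation X := (d.-tuple R).

Definition pos_def_kernel (k : X -> X -> R) : Prop :=
  (forall x y, k x y = k y x) /\
  (forall (n : nat) (x : 'I_n -> X) (c : 'I_n -> R),
      0 <= \sum_(i < n) \sum_(j < n) c i * c j * k (x i) (x j)).

(* <mu_P, mu_Q>_H = \int\int k(x,y) dP(x) dQ(y) *)
Definition kinner (k : X -> X -> R) (P Q : probability X R) : R :=
  fine (\int[P]_x \int[Q]_y (k x y)%:E)%E.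

Definition mmd2 (k : X -> X -> R) (P Q : probability X R) : R :=
  kinner k P P - 2 * kinner k P Q + kinner k Q Q.

Definition characteristic (k : X -> X -> R) : Prop :=
  forall P Q : probability X R, mmd2 k P Q = 0 ->
    forall A : set X, measurable A -> P A = Q A.

Context {dO : measure_display} {Omega : measurableType dO}.

Definition Chat (k : X -> X -> R) (Y : nat -> Omega -> X) (s e : nat)
    (w : Omega) : R :=
  \sum_(s <= t < e.+1) k (Y t w) (Y t w)
  - ((e - s).+1%:R)^-1 *
    \sum_(s <= i < e.+1) \sum_(s <= j < e.+1) k (Y i w) (Y j w).

Definition Cexp (P : probability Omega R) (k : X -> X -> R)
    (Y : nat -> Omega -> X) (s e : nat) : R :=
  fine (\int[P]_w (Chat k Y s e w)%:E)%E.

Definition sigma_gen (Y : nat -> Omega -> X) (I : set nat) : set (set Omega) :=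
  <<s \bigcup_(i in I) [set Y i @^-1` A | A in (@measurable _ X)] >>.

Definition indep_sigma (P : probability Omega R) (F G : set (set Omega)) : Prop :=
  forall A B, F A -> G B -> P (A `&` B) = (P A * P B)%E.

Definition m_dependent (P : probability Omega R) (Y : nat -> Omega -> X)
    (T m : nat) : Prop :=
  forall t : nat,
    indep_sigma P (sigma_gen Y [set i | (1 <= i <= t)%N])
                  (sigma_gen Y [set i | (t + m + 1 <= i <= T)%N]).

(* strict stationarity of (Y_t)_{a < t <= b}: all finite-dimensional
   distributions (evaluated on measurable rectangles) are shift invariant *)
Definition strictly_stationary_on (P : probability Omega R)
    (Y : nat -> Omega -> X) (a b : nat) : Prop :=
  forall (n : nat) (ts : 'I_n -> nat) (h : nat) (A : 'I_n -> set X),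
    (forall i, measurable (A i)) ->
    (forall i, (a < ts i <= b)%N /\ (a < ts i + h <= b)%N) ->
    P (\bigcap_(i in [set: 'I_n]) (Y (ts i + h) @^-1` A i)) =
    P (\bigcap_(i in [set: 'I_n]) (Y (ts i) @^-1` A i)).

Definition marginal_on (P : probability Omega R) (Y : nat -> Omega -> X)
    (a b : nat) (Q : probability X R) : Prop :=
  forall t, (a < t <= b)%N -> forall A : set X, measurable A ->
    P (Y t @^-1` A) = Q A.

(* a segmentation with change points c = [tau'_1; ...; tau'_K'] of {1..T}:
   0 < tau'_1 < ... < tau'_K' < T *)
Definition valid_seg (T : nat) (c : seq nat) : bool := path ltn 0 (rcons c T).

(* its segments [tau'_{r-1}+1, tau'_r], as pairs (start, end) *)
Definition segments (T : nat) (c : seq nat) : seq (nat * nat) :=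
  pairmap (fun a b => (a.+1, b)) 0 (rcons c T).

Definition admissible (delta : R) (T : nat) (c : seq nat) : bool :=
  valid_seg T c && all (fun p => delta <= ((p.2 - p.1).+1)%:R) (segments T c).

Definition Lcost (k : X -> X -> R) (Y : nat -> Omega -> X) (beta : R)
    (T : nat) (c : seq nat) (w : Omega) : R :=
  \sum_(p <- segments T c) Chat k Y p.1 p.2 w + beta * (size c)%:R.

End Defs.

Definition lambdaT {R : realType} (M : R) (m T : nat) : R :=
  4 * Num.sqrt 2 * M * Num.sqrt ((8 * m + 5)%:R * ln (T%:R)).

Definition Bbar {R : realType} (M : R) (m : nat) (deltaT : R) : R :=
  (4 * m + 2)%:R * M + (2 * m ^ 2 + 2 * m)%:R * M / deltaT.

Definition asymp_sqrt_nlogn {R : realType} (delta : nat -> R) : Prop :=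
  exists c1 c2 : R, 0 < c1 /\ 0 < c2 /\ exists N : nat, forall n, (N <= n)%N ->
    c1 * Num.sqrt (n%:R * ln n%:R) <= delta n <= c2 * Num.sqrt (n%:R * ln n%:R).

(* Main.v *)
Require Import Defs.
From HB Require Import structures.
From mathcomp Require Import all_boot all_order all_algebra.
From mathcomp Require Import all_classical all_reals all_analysis.
From mathcomp Require Import zify ring lra.
Import Order.TTheory GRing.Theory Num.Theory.
Local Open Scope classical_set_scope.
Local Open Scope ring_scope.
Set Implicit Arguments. Unset Strict Implicit.


Ltac natlia := repeat match goal with
 | H : ?U |- _ => lazymatch U with
     | is_true (leq _ _) => fail
     | is_true (andb _ _) => fail
     | is_true (orb _ _) => fail
     | is_true (negb _) => fail
     | is_true (eq_op _ _) => fail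
     | @eq nat _ _ => fail
     | nat => fail
     | _ => clear H
     end
 end; lia.

Lemma Rint_bound (R : realType) (dT : measure_display) (T : measurableType dT)
  (mu : probability T R) (f : T -> R) (M : R) :
  measurable_fun setT f -> (forall x, 0 <= f x <= M) ->
  mu.-integrable setT (EFin \o f) /\
  0 <= Rintegral mu setT f <= M.
Proof.
move=> mf hf.
have fint : mu.-integrable setT (EFin \o f).
  apply: measurable_bounded_integrable => //.
    by have := probability_setT mu; rewrite /= => ->; rewrite ltry.
  exists M; split; first exact: num_real.
  move=> y My x _; have /andP[h0 h1] := hf x.
  by rewrite /= ger0_norm // ltW // (le_lt_trans h1 My).
split => //; apply/andP; split.
  by apply: Rintegral_ge0 => x _; case/andP: (hf x).
have -> : M = Rintegral mu setT (fun=> M).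
  by rewrite Rintegral_cst //; have := probability_setT mu; rewrite /= => ->; rewrite mulr1.
apply: le_Rintegral => //.
  exact: finite_measure_integrable_cst.
by move=> x _; case/andP: (hf x).
Qed.

Definition goodf (R : realType) (dT : measure_display) (T : measurableType dT) (f : T -> R) :=
  measurable_fun setT f /\ exists c : R, forall x, `|f x| <= c.
Arguments goodf {R dT T}.

Lemma goodf_int (R : realType) (dT : measure_display) (T : measurableType dT)
  (mu : probability T R) (f : T -> R) : goodf f -> mu.-integrable setT (EFin \o f).
Proof.
move=> [mf [c hc]]; apply: measurable_bounded_integrable => //.
  by have := probability_setT mu; rewrite /= => ->; rewrite ltry.
exists c; split; first exact: num_real.
by move=> y cy x _; rewrite /= ltW // (le_lt_trans (hc x) cy).
Qed.

Lemma goodfD (R : realType) (dT : measure_display) (T : measurableType dT) (f g : T -> R) :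
  goodf f -> goodf g -> goodf (fun x => f x + g x).
Proof.
move=> [mf [c hc]] [mg [c' hc']]; split; first exact: measurable_realfun.measurable_funD.
exists (c + c') => x; apply: le_trans (ler_normD _ _) _; exact: lerD.
Qed.

Lemma goodfZ (R : realType) (dT : measure_display) (T : measurableType dT) (f : T -> R) (r : R) :
  goodf f -> goodf (fun x => r * f x).
Proof.
move=> [mf [c hc]]; split; first exact: (measurable_realfun.measurable_funM (measurable_cst r) mf).
exists (`|r| * c) => x; rewrite normrM; apply: ler_wpM2l => //.
Qed.

Lemma Rint_sum (R : realType) (dT : measure_display) (T : measurableType dT)
  (mu : probability T R) (I : eqType) (r : seq I) (F : I -> T -> R) :
  (forall i, i \in r -> goodf (F i)) ->
  goodf (fun x => \sum_(i <- r) F i x) /\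
  Rintegral mu setT (fun x => \sum_(i <- r) F i x) = \sum_(i <- r) Rintegral mu setT (F i).
Proof.
elim: r => [|i r IH] h.
  rewrite big_nil; under eq_fun do rewrite big_nil.
  split; first by split; [exact: measurable_cst | exists 0 => x; rewrite normr0].
  by rewrite Rintegral_cst //= mul0r.
have [g1 e1] : _ := IH (fun j jr => h j (mem_behead (s := i :: r) jr)).
have hi : goodf (F i) by apply: h; rewrite mem_head.
rewrite big_cons; under eq_fun do rewrite big_cons.
split; first exact: goodfD.
rewrite RintegralD //; first by rewrite e1.
- exact: goodf_int.
- exact: goodf_int.
Qed.

Arguments Rint_sum {R dT T} mu {I r} F.

Lemma RintZ (R : realType) (dT : measure_display) (T : measurableType dT)
  (mu : probability T R) (f : T -> R) (r : R) : goodf f ->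
  Rintegral mu setT (fun x => r * f x) = r * Rintegral mu setT f.
Proof. by move=> gf; rewrite RintegralZl //; exact: goodf_int. Qed.

Lemma RintB (R : realType) (dT : measure_display) (T : measurableType dT)
  (mu : probability T R) (f g : T -> R) : goodf f -> goodf g ->
  Rintegral mu setT (fun x => f x - g x) = Rintegral mu setT f - Rintegral mu setT g.
Proof. by move=> gf gg; rewrite RintegralB //; exact: goodf_int. Qed.


Lemma count_win0 (i m r : nat) :
  (\sum_(0 <= j < r) ((i <= j + m) && (j <= i + m) : nat) = minn r (i + m + 1) - (i - m))%N.
Proof.
elim: r => [|r IH]; first by rewrite big_geq //; lia.
rewrite big_nat_recr //= IH.
case: (boolP ((i <= r + m) && (r <= i + m))%N) => /= [/andP[h1 h2]|h]; first by lia.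
move/negP: h => h.
have : ~ ((i <= r + m) /\ (r <= i + m))%N by move=> [h1 h2]; apply: h; rewrite h1 h2.
lia.
Qed.

Lemma count_win (i m l r : nat) :
  (\sum_(l <= j < r) ((i <= j + m) && (j <= i + m) : nat) <= 2 * m + 1)%N.
Proof.
case: (leqP l r) => hlr; last by rewrite big_geq // ltnW.
apply: (@leq_trans (\sum_(0 <= j < r) ((i <= j + m) && (j <= i + m) : nat))).
  by rewrite (@big_cat_nat _ _ _ l 0 r) //= leq_addl.
rewrite count_win0; lia.
Qed.

Lemma block_err (R : realType) (a : nat -> nat -> R) (c M : R) (m l1 r1 l2 r2 : nat) :
 0 <= M ->
 (forall i j, (l1 <= i < r1)%N -> (l2 <= j < r2)%N -> `|a i j - c| <= M) ->
 (forall i j, (l1 <= i < r1)%N -> (l2 <= j < r2)%N -> (i + m < j)%N || (j + m < i)%N -> a i j = c) ->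
 `|\sum_(l1 <= i < r1) \sum_(l2 <= j < r2) a i j - ((r1 - l1) * (r2 - l2))%:R * c|
   <= (r1 - l1)%:R * ((2 * m + 1)%:R * M).
Proof.
move=> M0 hb hc.
have -> : \sum_(l1 <= i < r1) \sum_(l2 <= j < r2) a i j - ((r1 - l1) * (r2 - l2))%:R * c
   = \sum_(l1 <= i < r1) \sum_(l2 <= j < r2) (a i j - c).
  symmetry; under eq_bigr => i _ do rewrite sumrB sumr_const_nat.
  rewrite sumrB sumr_const_nat; congr (_ - _).
  by rewrite -mulrnA mulr_natl mulnC.
apply: le_trans (ler_norm_sum _ _ _) _.
rewrite mulr_natl -sumr_const_nat.
rewrite big_nat_cond [X in _ <= X]big_nat_cond.
apply: ler_sum => i /andP[hi _].
apply: le_trans (ler_norm_sum _ _ _) _.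
apply: (@le_trans _ _ (\sum_(l2 <= j < r2) (((i <= j + m) && (j <= i + m))%N : nat)%:R * M)).
  rewrite big_nat_cond [X in _ <= X]big_nat_cond.
  apply: ler_sum => j /andP[hj _].
  case: (boolP ((i <= j + m) && (j <= i + m))%N) => h.
    by rewrite mul1r; apply: hb.
  rewrite mul0r hc ?subrr ?normr0 //.
  move: h; rewrite negb_and -!ltnNge => /orP[] h; apply/orP; [right|left]; lia.
rewrite -mulr_suml -natr_sum ler_wpM2r // ler_nat; exact: count_win.
Qed.

Lemma core_alg (R : realType) (x1 x2 SA SB SAB k11 k22 k12 q : R) :
  0 < x1 -> 0 < x2 -> 0 <= q ->
  `|SA - x1 * x1 * k11| <= x1 * q ->
  `|SB - x2 * x2 * k22| <= x2 * q ->
  `|SAB - x1 * x2 * k12| <= x1 * q ->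
  `|SAB - x1 * x2 * k12| <= x2 * q ->
  x1 * x2 / (x1 + x2) * (k11 - 2 * k12 + k22) - 2 * q <=
  SA / x1 + SB / x2 - (SA + SB + 2 * SAB) / (x1 + x2).
Proof.
move=> p1 p2 q0 hA hB hC hD.
set EA := SA - x1 * x1 * k11.
set EB := SB - x2 * x2 * k22.
set EC := SAB - x1 * x2 * k12.
have eA : SA = x1 * x1 * k11 + EA by rewrite /EA; ring.
have eB : SB = x2 * x2 * k22 + EB by rewrite /EB; ring.
have eC : SAB = x1 * x2 * k12 + EC by rewrite /EC; ring.
have lA : - (x1 * q) <= EA by move: hA; rewrite ler_norml => /andP[].
have lB : - (x2 * q) <= EB by move: hB; rewrite ler_norml => /andP[].
have uC1 : EC <= x1 * q by move: hC; rewrite ler_norml => /andP[].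
have uC2 : EC <= x2 * q by move: hD; rewrite ler_norml => /andP[].
have n0 : 0 < x1 + x2 by lra.
rewrite -subr_ge0.
have -> : SA / x1 + SB / x2 - (SA + SB + 2 * SAB) / (x1 + x2) -
   (x1 * x2 / (x1 + x2) * (k11 - 2 * k12 + k22) - 2 * q) =
   (x2 * x2 * (EA + x1 * q) + x1 * x1 * (EB + x2 * q) + x1 * x2 * (x1 * q - EC)
    + x1 * x2 * (x2 * q - EC)) / (x1 * x2 * (x1 + x2)).
  rewrite eA eB eC; field.
  by rewrite (lt0r_neq0 n0) (lt0r_neq0 p1) (lt0r_neq0 p2).
apply: divr_ge0; last by rewrite !mulr_ge0 // ltW.
have h1 : 0 <= EA + x1 * q by lra.
have h2 : 0 <= EB + x2 * q by lra.
have h3 : 0 <= x1 * q - EC by lra.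
have h4 : 0 <= x2 * q - EC by lra.
have p1' := ltW p1; have p2' := ltW p2.
by rewrite !addr_ge0 // !mulr_ge0.
Qed.

Section Model.
Context (R : realType) (dO : measure_display) (Omega : measurableType dO)
  (P : probability Omega R) (d : nat) (T : nat)
  (Y : nat -> Omega -> d.-tuple R)
  (k : d.-tuple R -> d.-tuple R -> R) (M : R) (m : nat)
  (HYmeas : forall t, (1 <= t <= T)%N -> measurable_fun setT (Y t))
  (Hk_meas : measurable_fun setT (fun xy : d.-tuple R * d.-tuple R => k xy.1 xy.2))
  (Hk_sym : forall x y, k x y = k y x)
  (Hk_bnd : forall x y, 0 <= k x y <= M).
Notation X := (d.-tuple R).

Let k0 x y : 0 <= k x y. Proof. by case/andP: (Hk_bnd x y). Qed.

Lemma kinner_prod (Qa Qb : probability X R) :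
  (\int[Qa \x Qb]_z (k z.1 z.2)%:E = \int[Qa]_x \int[Qb]_y (k x y)%:E)%E.
Proof.
rewrite fubini_tonelli1 //=.
- exact/measurable_realfun.measurable_EFinP.
- by move=> z; rewrite lee_fin.
Qed.

Lemma indep_int (Y1 Y2 : Omega -> X) (Qa Qb : probability X R) :
  measurable_fun setT Y1 -> measurable_fun setT Y2 ->
  (forall A B, measurable A -> measurable B ->
     P (Y1 @^-1` A `&` Y2 @^-1` B) = (P (Y1 @^-1` A) * P (Y2 @^-1` B))%E) ->
  (forall A, measurable A -> P (Y1 @^-1` A) = Qa A) ->
  (forall A, measurable A -> P (Y2 @^-1` A) = Qb A) ->
  (\int[P]_w (k (Y1 w) (Y2 w))%:E = \int[Qa]_x \int[Qb]_y (k x y)%:E)%E.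
Proof.
move=> m1 m2 hind h1 h2.
have mphi : measurable_fun setT (fun w => (Y1 w, Y2 w)) by exact: measurable_fun_pair.
rewrite -kinner_prod.
rewrite (eq_measure_integral (pushforward P (fun w => (Y1 w, Y2 w)))); last first.
  move=> A mA _; apply: product_measure_unique => // B1 B2 mB1 mB2.
  rewrite /pushforward.
  rewrite /=; rewrite -h1 // -h2 // -hind //.
  idtac.
rewrite ge0_integral_pushforward //.
- exact/measurable_realfun.measurable_EFinP.
- by move=> z _; rewrite lee_fin.
Qed.

Definition aa i j := Rintegral P setT (fun w => k (Y i w) (Y j w)).

Lemma good_kY i j : (1 <= i <= T)%N -> (1 <= j <= T)%N ->
  goodf (fun w => k (Y i w) (Y j w)).
Proof.
move=> hi hj; split.
  have h := measurableT_comp Hk_meas (measurable_fun_pair (HYmeas hi) (HYmeas hj)); exact: h.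
exists M => w; rewrite ger0_norm //; by case/andP: (Hk_bnd (Y i w) (Y j w)).
Qed.


Lemma aa_bnd i j : (1 <= i <= T)%N -> (1 <= j <= T)%N -> 0 <= aa i j <= M.
Proof.
move=> hi hj; have [mf _] := good_kY hi hj.
by have [_ ] := Rint_bound P mf (fun w => Hk_bnd (Y i w) (Y j w)).
Qed.

Lemma aa_sym i j : aa i j = aa j i.
Proof. rewrite /aa; congr Rintegral; apply/funext => w; exact: Hk_sym. Qed.

Lemma kinner_bnd (Q Q' : probability X R) : 0 <= kinner k Q Q' <= M.
Proof.
rewrite /kinner -kinner_prod.
have [_ ] := Rint_bound (Q \x Q')%E Hk_meas (fun z => Hk_bnd z.1 z.2).
by rewrite /Rintegral.
Qed.

Lemma Cexp_eq s e : (1 <= s)%N -> (e <= T)%N ->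
  Cexp P k Y s e = \sum_(s <= t < e.+1) aa t t -
    ((e - s).+1%:R)^-1 * \sum_(s <= i < e.+1) \sum_(s <= j < e.+1) aa i j.
Proof.
move=> hs he.
have mem t : t \in index_iota s e.+1 -> (1 <= t <= T)%N.
  rewrite mem_index_iota => /andP[h1 h2]; apply/andP; split.
    exact: leq_trans hs h1.
  by rewrite -ltnS (leq_trans h2) // ltnS.
have [g1 e1] := Rint_sum P (fun t w => k (Y t w) (Y t w))
   (fun t ht => good_kY (mem t ht) (mem t ht)).
have g2 i : i \in index_iota s e.+1 ->
    goodf (fun w => \sum_(s <= j < e.+1) k (Y i w) (Y j w)).
  move=> hi; have [g _] := Rint_sum P (fun j w => k (Y i w) (Y j w))
     (fun j hj => good_kY (mem i hi) (mem j hj)).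
  exact: g.
have [g3 e3] := Rint_sum P (fun i w => \sum_(s <= j < e.+1) k (Y i w) (Y j w)) g2.
rewrite /Cexp -/(Rintegral P setT (Chat k Y s e)) /Chat.
rewrite RintB //; last exact: goodfZ.
rewrite RintZ // e1 e3; congr (_ - _ * _).
apply: eq_big_seq => i hi.
have [_ e4] := Rint_sum P (fun j w => k (Y i w) (Y j w))
     (fun j hj => good_kY (mem i hi) (mem j hj)).
exact: e4.
Qed.

Lemma aa_indep i j (Qa Qb : probability X R) :
  m_dependent P Y T m -> (1 <= i)%N -> (i + m < j)%N -> (j <= T)%N ->
  (forall A, measurable A -> P (Y i @^-1` A) = Qa A) ->
  (forall A, measurable A -> P (Y j @^-1` A) = Qb A) ->
  aa i j = kinner k Qa Qb.
Proof.
move=> Hdep hi hij hj h1 h2.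
have hiT : (1 <= i <= T)%N.
  by rewrite hi /= (leq_trans _ hj) // (leq_trans (leq_addr m i)) // ltnW.
have hjT : (1 <= j <= T)%N by rewrite hj andbT (leq_trans hi) // (leq_trans (leq_addr m i)) // ltnW.
rewrite /aa /Rintegral /kinner (indep_int (Qa := Qa) (Qb := Qb) (HYmeas hiT) (HYmeas hjT)) //.
move=> A B mA mB; apply: (Hdep i).
  apply: sub_gen_smallest; exists i; first by rewrite /= leqnn hi.
  by exists A.
apply: sub_gen_smallest; exists j; first by rewrite /= hj andbT addn1.
by exists B.
Qed.

Lemma D_bound (s tau e : nat) (Q1 Q2 : probability X R) :
  m_dependent P Y T m ->
  (1 <= s)%N -> (s <= tau)%N -> (tau < e)%N -> (e <= T)%N ->
  (forall t, (s <= t <= tau)%N -> forall A, measurable A -> P (Y t @^-1` A) = Q1 A) ->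
  (forall t, (tau < t <= e)%N -> forall A, measurable A -> P (Y t @^-1` A) = Q2 A) ->
  ((tau - s).+1)%:R * ((e - tau.+1).+1)%:R / (((tau - s).+1)%:R + ((e - tau.+1).+1)%:R)
    * mmd2 k Q1 Q2 - 2 * ((2 * m + 1)%:R * M)
  <= Cexp P k Y s e - Cexp P k Y s tau - Cexp P k Y tau.+1 e.
Proof.
move=> Hdep hs hst hte heT hQ1 hQ2.
have htT : (tau <= T)%N by natlia.
rewrite !Cexp_eq //.
have M0 : 0 <= M by case/andP: (Hk_bnd (nseq_tuple d 0) (nseq_tuple d 0)) => h1 h2; apply: le_trans h2.
have hn : (e - s).+1 = ((tau - s).+1 + (e - tau.+1).+1)%N by natlia.
rewrite hn (natrD _ (tau - s).+1).
set x1 := ((tau - s).+1)%:R; set x2 := ((e - tau.+1).+1)%:R.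
have h1 : (s <= tau.+1)%N by natlia.
have h2 : (tau.+1 <= e.+1)%N by natlia.
have eD : \sum_(s <= t < e.+1) aa t t =
   \sum_(s <= t < tau.+1) aa t t + \sum_(tau.+1 <= t < e.+1) aa t t.
  by rewrite (@big_cat_nat _ _ _ tau.+1 s e.+1 _ _ h1 h2).
set SA := \sum_(s <= i < tau.+1) \sum_(s <= j < tau.+1) aa i j.
set SB := \sum_(tau.+1 <= i < e.+1) \sum_(tau.+1 <= j < e.+1) aa i j.
set SAB := \sum_(s <= i < tau.+1) \sum_(tau.+1 <= j < e.+1) aa i j.
have eS : \sum_(s <= i < e.+1) \sum_(s <= j < e.+1) aa i j = SA + SB + 2 * SAB.
  rewrite (@big_cat_nat _ _ _ tau.+1 s e.+1 _ _ h1 h2) /=.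
  rewrite [X in X + _ = _](eq_bigr (fun i => \sum_(s <= j < tau.+1) aa i j
       + \sum_(tau.+1 <= j < e.+1) aa i j)); last by move=> i _; rewrite (@big_cat_nat _ _ _ tau.+1 s e.+1 _ _ h1 h2).
  rewrite [X in _ + X = _](eq_bigr (fun i => \sum_(s <= j < tau.+1) aa i j
       + \sum_(tau.+1 <= j < e.+1) aa i j)); last by move=> i _; rewrite (@big_cat_nat _ _ _ tau.+1 s e.+1 _ _ h1 h2).
  rewrite !big_split /= -/SA -/SB -/SAB.
  have -> : \sum_(tau.+1 <= i < e.+1) \sum_(s <= j < tau.+1) aa i j = SAB.
    rewrite /SAB exchange_big /=; apply: eq_bigr => i _; apply: eq_bigr => j _.
    exact: aa_sym.
  by rewrite mulr2n; ring.
rewrite eD eS.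
have E1 : (tau.+1 - s = (tau - s).+1)%N by natlia.
have E2 : (e.+1 - tau.+1 = (e - tau.+1).+1)%N by natlia.
have inA i : (s <= i < tau.+1)%N -> (1 <= i <= T)%N by natlia.
have inB i : (tau.+1 <= i < e.+1)%N -> (1 <= i <= T)%N by natlia.
have normb i j c : (1 <= i <= T)%N -> (1 <= j <= T)%N -> 0 <= c <= M -> `|aa i j - c| <= M.
  move=> hi hj /andP[c0 cM]; have /andP[a0 aM] := aa_bnd hi hj.
  by rewrite ler_norml; apply/andP; split; lra.
have hk11 := kinner_bnd Q1 Q1; have hk22 := kinner_bnd Q2 Q2; have hk12 := kinner_bnd Q1 Q2.
have q0 : 0 <= (2 * m + 1)%:R * M by apply: mulr_ge0.
have bA : `|SA - x1 * x1 * kinner k Q1 Q1| <= x1 * ((2 * m + 1)%:R * M).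
  have := @block_err R aa (kinner k Q1 Q1) M m s tau.+1 s tau.+1 M0.
  rewrite E1 natrM; apply.
    by move=> i j hi hj; apply: normb => //; [exact: inA | exact: inA].
  move=> i j hi hj /orP[] hij.
    apply: aa_indep => //; [natlia | natlia | |]; move=> A mA.
      by apply: hQ1 => //; natlia.
    by apply: hQ1 => //; natlia.
  rewrite aa_sym; apply: aa_indep => //; [natlia | natlia | |]; move=> A mA.
    by apply: hQ1 => //; natlia.
  by apply: hQ1 => //; natlia.
have bB : `|SB - x2 * x2 * kinner k Q2 Q2| <= x2 * ((2 * m + 1)%:R * M).
  have := @block_err R aa (kinner k Q2 Q2) M m tau.+1 e.+1 tau.+1 e.+1 M0.
  rewrite E2 natrM; apply.
    by move=> i j hi hj; apply: normb => //; [exact: inB | exact: inB].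
  move=> i j hi hj /orP[] hij.
    apply: aa_indep => //; [natlia | natlia | |]; move=> A mA.
      by apply: hQ2 => //; natlia.
    by apply: hQ2 => //; natlia.
  rewrite aa_sym; apply: aa_indep => //; [natlia | natlia | |]; move=> A mA.
    by apply: hQ2 => //; natlia.
  by apply: hQ2 => //; natlia.
have bC : `|SAB - x1 * x2 * kinner k Q1 Q2| <= x1 * ((2 * m + 1)%:R * M).
  have := @block_err R aa (kinner k Q1 Q2) M m s tau.+1 tau.+1 e.+1 M0.
  rewrite E1 E2 natrM; apply.
    by move=> i j hi hj; apply: normb => //; [exact: inA | exact: inB].
  move=> i j hi hj /orP[] hij; last by natlia.
  apply: aa_indep => //; [natlia | natlia | |]; move=> A mA.
    by apply: hQ1 => //; natlia.
  by apply: hQ2 => //; natlia.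
have bD : `|SAB - x1 * x2 * kinner k Q1 Q2| <= x2 * ((2 * m + 1)%:R * M).
  have := @block_err R (fun j i => aa i j) (kinner k Q1 Q2) M m tau.+1 e.+1 s tau.+1 M0.
  rewrite E1 E2 (mulnC (e - tau.+1).+1) natrM exchange_big /=; apply.
    by move=> i j hi hj; apply: normb => //; [exact: inA | exact: inB].
  move=> i j hi hj /orP[] hij; first by natlia.
  apply: aa_indep => //; [natlia | natlia | |]; move=> A mA.
    by apply: hQ1 => //; natlia.
  by apply: hQ2 => //; natlia.
have p1 : 0 < x1 by rewrite /x1 ltr0n.
have p2 : 0 < x2 by rewrite /x2 ltr0n.
have := core_alg p1 p2 q0 bA bB bC bD.
rewrite /mmd2.
move=> H; apply: (le_trans H) => {H}.
rewrite le_eqVlt; apply/orP; left; apply/eqP.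
rewrite /SA /SB /SAB; ring.
Qed.
End Model.

Lemma path_ltn_last (x : nat) p : path ltn x p -> (x <= last x p)%N.
Proof. elim: p x => //= y p IH x /andP[xy py]; exact: leq_trans (ltnW xy) (IH _ py). Qed.

Lemma bigmin_le_nat (R : realType) (x0 : R) (F : nat -> R) a b j :
  (a <= j < b)%N -> \big[Num.min/x0]_(a <= i < b) F i <= F j.
Proof.
move=> /andP[haj hjb].
have [n hn] : exists n, j = (a + n)%N by exists (j - a)%N; lia.
elim: n a haj hn => [|n IH] a haj hn.
  rewrite big_ltn; last by lia.
  by rewrite ge_min hn addn0 lexx.
rewrite big_ltn; last by lia.
rewrite ge_min; apply/orP; right; apply: IH; lia.
Qed.

Lemma ratio_ge (R : realType) (dl x1 x2 : R) : 0 < dl -> dl <= x1 -> dl <= x2 ->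
  dl / 2 <= x1 * x2 / (x1 + x2).
Proof.
move=> d0 h1 h2.
have p1 : 0 < x1 by lra.
have p2 : 0 < x2 by lra.
rewrite -subr_ge0.
have -> : x1 * x2 / (x1 + x2) - dl / 2 = (x2 * (x1 - dl) + x1 * (x2 - dl)) / (2 * (x1 + x2)).
  field.
  apply: lt0r_neq0; lra.
apply: divr_ge0; last lra.
apply: addr_ge0; apply: mulr_ge0; lra.
Qed.

Unset Implicit Arguments.

Theorem mainTheorem9
  (R : realType) (dO : measure_display) (Omega : measurableType dO)
  (P : probability Omega R) (d : nat) (T : nat)
  (Y : nat -> Omega -> d.-tuple R)
  (K : nat) (tau : nat -> nat) (Pk : nat -> probability (d.-tuple R) R)
  (k : d.-tuple R -> d.-tuple R -> R) (M : R) (m : nat)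
  (delta beta : nat -> R) (T0 : nat)
  (* the observations are random vectors in R^d *)
  (HYmeas : forall t, (1 <= t <= T)%N -> measurable_fun setT (Y t))
  (* true change points 0 = tau_0 < tau_1 < ... < tau_K < tau_{K+1} = T *)
  (Htau0 : tau 0%N = 0%N) (HtauK : tau K.+1 = T)
  (Htau_incr : forall j, (j <= K)%N -> (tau j < tau j.+1)%N)
  (* (A1) *)
  (HA1dep : m_dependent P Y T m)
  (HA1stat : forall j, (1 <= j <= K.+1)%N ->
     strictly_stationary_on P Y (tau j.-1) (tau j) /\
     marginal_on P Y (tau j.-1) (tau j) (Pk j))
  (* (A2) *)
  (Hk_meas : measurable_fun setT (fun xy : d.-tuple R * d.-tuple R => k xy.1 xy.2))
  (Hk_pd : pos_def_kernel k) (Hk_char : characteristic k)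
  (Hk_bnd : forall x y, 0 <= k x y <= M)
  (* (A3) *)
  (HA3 : forall j, (1 <= j <= K)%N -> 0 < mmd2 k (Pk j) (Pk j.+1))
  (* (A6) *)
  (Hdelta_pos : forall n, 0 < delta n)
  (Hdelta_rate : asymp_sqrt_nlogn delta)
  (HA6 : forall j, (j <= K)%N -> delta T <= ((tau j.+1 - tau j)%N)%:R / 3)
  (* (A7') with Delta_*^2 = min_k Delta_k^2 *)
  (HA7 : forall n, (T0 <= n)%N ->
     delta n / 2 *
       \big[Num.min/mmd2 k (Pk 1%N) (Pk 2%N)]_(1 <= j < K.+1)
          mmd2 k (Pk j) (Pk j.+1)
     > beta n + 3 * lambdaT M m n * Num.sqrt (n%:R) + Bbar M m (delta n))
  (HT0 : (T0 <= T)%N) (HT3 : (3 <= T)%N)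
  (* the segmentation tau = c1 ++ c2, admissible, containing E = [s, e] *)
  (c1 c2 : seq nat)
  (Hadm : admissible (delta T) T (c1 ++ c2))
  (j0 : nat) (Hj0 : (1 <= j0 <= K)%N) :
  let s := (last 0%N c1).+1 in
  let e := head T c2 in
  (* E contains exactly one true change point, tau_{j0}, with s <= tau_{j0} < e *)
  (s <= tau j0 < e)%N ->
  (forall j, (1 <= j <= K)%N -> (s <= tau j <= e)%N -> j = j0) ->
  delta T <= ((tau j0 - s).+1)%:R ->
  delta T <= ((e - tau j0)%N)%:R ->
  forall w : Omega,
    (* the event E_T *)
    (forall s' e' : nat, (1 <= s' <= e' <= T)%N ->
       `|Chat k Y s' e' w - Cexp P k Y s' e'|
         <= lambdaT M m T * Num.sqrt (((e' - s').+1)%:R)) ->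
    admissible (delta T) T (c1 ++ tau j0 :: c2) /\
    Lcost k Y (beta T) T (c1 ++ tau j0 :: c2) w
      < Lcost k Y (beta T) T (c1 ++ c2) w.
Proof.
move=> s e /andP[hst hte] huniq hd1 hd2 w hev.
have [rest hr] : exists rest, rcons c2 T = e :: rest.
  by rewrite /e; case: (c2) => [|y c] /=; [exists [::] | exists (rcons c T)].
move: (Hadm); rewrite /admissible => /andP[hval hall].
have hseg_old : segments T (c1 ++ c2) = pairmap (fun a b => (a.+1, b)) 0%N c1 ++
    (s, e) :: pairmap (fun a b => (a.+1, b)) e rest.
  by rewrite /segments rcons_cat hr pairmap_cat.
have hseg_new : segments T (c1 ++ tau j0 :: c2) = pairmap (fun a b => (a.+1, b)) 0%N c1 ++
    (s, tau j0) :: ((tau j0).+1, e) :: pairmap (fun a b => (a.+1, b)) e rest.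
  by rewrite /segments rcons_cat rcons_cons hr pairmap_cat.
move: hval; rewrite /valid_seg rcons_cat hr cat_path /= => /and3P[hp1 hlast hprest].
have heT : (e <= T)%N.
  have : last e rest = T by have := last_rcons 0%N c2 T; rewrite hr.
  move=> <-; exact: path_ltn_last.
have hprev : (tau j0.-1 < s)%N.
  case: (ltnP (tau j0.-1) s) => // hle; exfalso.
  have [hz|hnz] := eqVneq (j0.-1) 0%N.
    by move: hle; rewrite hz Htau0.
  have hj1 : (1 <= j0.-1 <= K)%N by natlia.
  have hinc := Htau_incr (j0.-1) (leq_trans (leq_pred j0) (proj2 (andP Hj0))).
  have e1 : (j0.-1).+1 = j0 by natlia.
  rewrite e1 in hinc.
  have := huniq _ hj1.
  have -> : (s <= tau j0.-1 <= e)%N by rewrite hle /= (leq_trans (ltnW hinc)) // ltnW.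
  move=> /(_ isT); natlia.
have hnext : (e <= tau j0.+1)%N.
  case: (leqP e (tau j0.+1)) => // hlt; exfalso.
  have hinc := Htau_incr j0 (proj2 (andP Hj0)).
  case: (ltnP K j0.+1) => hK.
    have hK' : j0 = K by natlia.
    by move: hlt; rewrite hK' HtauK; natlia.
  have hj : (1 <= j0.+1 <= K)%N by natlia.
  have := huniq j0.+1 hj.
  have -> : (s <= tau j0.+1 <= e)%N by apply/andP; split; natlia.
  move=> /(_ isT); natlia.
have hte' : ((e - (tau j0).+1).+1 = e - tau j0)%N by natlia.
split.
  rewrite /admissible /valid_seg rcons_cat rcons_cons hr cat_path /= hp1 hprest hte /=.
  rewrite andbT; apply/andP; split; first exact: hst.
  move: hall; rewrite hseg_old hseg_new !all_cat /= => /andP[-> /andP[_ ->]].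
  by rewrite hd1 /= hte' hd2.
rewrite /Lcost hseg_new hseg_old !big_cat !big_cons /= !size_cat /= addnS mulrS.
suff key : Chat k Y s (tau j0) w + Chat k Y (tau j0).+1 e w + beta T < Chat k Y s e w by lra.
have Hk_sym : forall x y, k x y = k y x := proj1 Hk_pd.
have M0 : 0 <= M.
  by case/andP: (Hk_bnd (nseq_tuple d 0) (nseq_tuple d 0)) => h1 h2; apply: le_trans h2.
have hj0K : (1 <= j0 <= K.+1)%N by natlia.
have margA : forall t, (s <= t <= tau j0)%N -> forall A, measurable A ->
    P (Y t @^-1` A) = Pk j0 A.
  move=> t ht A mA; have [_ hm] := HA1stat j0 hj0K; apply: hm => //; natlia.
have hj1K : (1 <= j0.+1 <= K.+1)%N by natlia.
have margB : forall t, (tau j0 < t <= e)%N -> forall A, measurable A ->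
    P (Y t @^-1` A) = Pk j0.+1 A.
  move=> t ht A mA; have [_ hm] := HA1stat j0.+1 hj1K; apply: hm => //=; natlia.
have hs1 : (0 < s)%N by [].
have hD := D_bound HYmeas Hk_meas Hk_sym Hk_bnd HA1dep hs1 hst hte heT margA margB.
have hl0 : 0 <= lambdaT M m T.
  rewrite /lambdaT; apply: mulr_ge0; last exact: sqrtr_ge0.
  by apply: mulr_ge0 => //; apply: mulr_ge0 => //; exact: sqrtr_ge0.
have hT1 : (1 <= T)%N by natlia.
have bnd : forall s' e', ((e' - s').+1 <= T)%N ->
    `|Chat k Y s' e' w - Cexp P k Y s' e'| <= lambdaT M m T * Num.sqrt T%:R.
  move=> s' e' h; apply: le_trans (hev s' e' _) _.
    exact: leq_trans (leq_b1 _) hT1.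
  by apply: ler_wpM2l => //; apply: ler_wsqrtr; rewrite ler_nat.
have b1 := bnd s (tau j0) ltac:(natlia).
have b2 := bnd (tau j0).+1 e ltac:(natlia).
have b3 := bnd s e ltac:(natlia).
move: b1 b2 b3; rewrite !ler_norml => /andP[b1 b1'] /andP[b2 b2'] /andP[b3 b3'].
have hA7 := HA7 T HT0.
have hmin : \big[Num.min/mmd2 k (Pk 1%N) (Pk 2%N)]_(1 <= j < K.+1) mmd2 k (Pk j) (Pk j.+1)
    <= mmd2 k (Pk j0) (Pk j0.+1).
  by apply: bigmin_le_nat; natlia.
have hDpos := HA3 j0 Hj0.
have hdl := Hdelta_pos T.
have hx2 : delta T <= ((e - (tau j0).+1).+1)%:R by rewrite hte'.
have hrat := ratio_ge hdl hd1 hx2.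
have hrD : delta T / 2 * \big[Num.min/mmd2 k (Pk 1%N) (Pk 2%N)]_(1 <= j < K.+1) mmd2 k (Pk j) (Pk j.+1)
   <= ((tau j0 - s).+1)%:R * ((e - (tau j0).+1).+1)%:R /
      (((tau j0 - s).+1)%:R + ((e - (tau j0).+1).+1)%:R) * mmd2 k (Pk j0) (Pk j0.+1).
  apply: le_trans (ler_wpM2l _ hmin) _; first by apply: divr_ge0; lra.
  by apply: ler_wpM2r => //; lra.
have hB : 2 * ((2 * m + 1)%:R * M) <= Bbar M m (delta T).
  rewrite /Bbar.
  have -> : (4 * m + 2)%:R = 2 * (2 * m + 1)%:R :> R.
    by rewrite -natrM; congr (_%:R); natlia.
  have : 0 <= (2 * m ^ 2 + 2 * m)%:R * M / delta T.
    by apply: divr_ge0; [apply: mulr_ge0 | lra].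
  lra.
lra.
Qed.
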